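(* Let $\phi$ be a Pogorelov solution and $\phi^*(x)=\sup_{y\in B(0,1)}\{x\cdot y-\phi(y)\}$ its Legendre–Fenchel dual. Define $\psi:\mathbb{R}^2\to\mathbb{R}$ by \[ \psi(x)=\min_{1\le k\le K}\{\phi^*(d_k)+\|x-d_k\|\}. \] Then $\phi^*=\psi^{**}$, i.e. $\phi^*$ is the convex envelope of $\psi$ (the largest convex function lying below $\psi$).
   Context: Let $K\ge 1$, $d_1,\dots,d_K\in\mathbb{R}^2$, $\alpha_1,\dots,\alpha_K>0$ with $\sum_k\alpha_k=\pi=|B(0,1)|$, where $B(0,1)$ is the unit ball of $\mathbb{R}^2$ and $|\cdot|$ is Lebesgue measure. A Pogorelov solution is a function $\phi(y)=\max_{k}\{y\cdot d_k-v_k\}$ on $B(0,1)$ (extended by $+\infty$ outside $B(0,1)$), for some reals $v_1,\dots,v_K$, such that $|C_k|=\alpha_k$ for every $k$, where $C_k=\{y\in B(0,1):\phi$ is differentiable at $y$ and $\nabla\phi(y)=d_k\}$. $\psi^{**}$ denotes the double Legendre–Fenchel transform of $\psi$. *)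

(* Defs.v *)
From HB Require Import structures.
From mathcomp Require Import all_boot all_order all_algebra.
From mathcomp Require Import all_classical all_reals all_analysis.
Set Implicit Arguments. Unset Strict Implicit. Unset Printing Implicit Defensive.
Import Order.TTheory GRing.Theory Num.Theory.
Import numFieldNormedType.Exports.
Local Open Scope classical_set_scope.
Local Open Scope ring_scope.

Section Pogorelov.
Variable R : realType.

Definition dot2 (x y : R * R) : R := x.1 * y.1 + x.2 * y.2.
Definition enorm2 (x : R * R) : R := Num.sqrt (dot2 x x).

Definition unit_ball2 : set (R * R) := [set y | enorm2 y < 1].

Definition leb2 := ((@lebesgue_measure R) \x (@lebesgue_measure R))%E.

(* y |-> max_k { y . d_k - v_k }  (real valued; the max is over k < K, K >= 1) *)
Definition pmax (K : nat) (d : 'I_K -> R * R) (v : 'I_K -> R) (y : R * R) : R :=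
  fine (\big[Order.max/-oo%E]_(k < K) ((dot2 y (d k) - v k)%:E))%E.

Definition phi_ext (K : nat) (d : 'I_K -> R * R) (v : 'I_K -> R) (y : R * R)
  : \bar R :=
  if `[< unit_ball2 y >] then (pmax d v y)%:E else +oo%E.

Definition Cset (K : nat) (d : 'I_K -> R * R) (v : 'I_K -> R) (k : 'I_K)
  : set (R * R) :=
  [set y | unit_ball2 y /\ differentiable (pmax d v) y /\
           (forall h : R * R, 'd (pmax d v) y h = dot2 h (d k))].

Definition pogorelov (K : nat) (d : 'I_K -> R * R) (alpha : 'I_K -> R)
  (v : 'I_K -> R) : Prop :=
  forall k, leb2 (Cset d v k) = (alpha k)%:E.

Definition legendre (f : R * R -> \bar R) (y : R * R) : \bar R :=
  ereal_sup [set ((dot2 x y)%:E - f x)%E | x in [set: R * R]].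

Definition phi_star (K : nat) (d : 'I_K -> R * R) (v : 'I_K -> R) (x : R * R)
  : \bar R :=
  ereal_sup [set ((dot2 x y)%:E - phi_ext d v y)%E | y in unit_ball2].

Definition psi (K : nat) (d : 'I_K -> R * R) (v : 'I_K -> R) (x : R * R)
  : \bar R :=
  (\big[Order.min/+oo%E]_(k < K) (phi_star d v (d k) + (enorm2 (x - d k))%:E))%E.

End Pogorelov.

(* Main.v *)
Require Import Defs.
From HB Require Import structures.
From mathcomp Require Import all_boot all_order all_algebra.
From mathcomp Require Import all_classical all_reals all_analysis.
From mathcomp Require Import ring lra.
Import Order.TTheory GRing.Theory Num.Theory.
Import numFieldNormedType.Exports.
Local Open Scope classical_set_scope.
Local Open Scope ring_scope.

Set Implicit Arguments. Unset Strict Implicit.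
Section Aux.
Variable R : realType.
Variable K : nat.
Hypothesis hK : (0 < K)%N.
Variable d : 'I_K -> R * R.
Variable v : 'I_K -> R.

Lemma pmax_spec (y : R * R) :
  (exists i, pmax d v y = dot2 y (d i) - v i) /\
  (forall k, dot2 y (d k) - v k <= pmax d v y).
Proof.
rewrite /pmax.
have k0 : 'I_K := Ordinal hK.
have := @le_bigmax _ _ _ (-oo)%E (fun k => ((dot2 y (d k) - v k)%:E)%E).
have [i0 _ ->] := @eq_bigmax _ _ _ (-oo)%E k0 xpredT
   (fun k => ((dot2 y (d k) - v k)%:E)%E) isT (fun i _ => leNye _).
move=> H; split; first by exists i0.
by move=> k; have := H k; rewrite /= lee_fin.
Qed.

Lemma pmax_ge y k : dot2 y (d k) - v k <= pmax d v y.
Proof. by have [_ ->] := pmax_spec y. Qed.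

Lemma dot2_sub (a b y : R * R) : @dot2 R (a - b) y = dot2 a y - dot2 b y.
Proof. rewrite /dot2 /=; lra. Qed.

Lemma enorm2_ge0 (a : R * R) : 0 <= enorm2 a.
Proof. exact: sqrtr_ge0. Qed.

Lemma dot2_self_ge0 (a : R * R) : 0 <= dot2 a a.
Proof. rewrite /dot2; nra. Qed.

Lemma sq_enorm2 (a : R * R) : enorm2 a ^+ 2 = dot2 a a.
Proof. by rewrite /enorm2 sqr_sqrtr // dot2_self_ge0. Qed.

Lemma cauchy_schwarz (w y : R * R) : dot2 w y <= enorm2 w * enorm2 y.
Proof.
have h1 : dot2 w y ^+ 2 <= dot2 w w * dot2 y y.
  rewrite /dot2 expr2; have := sqr_ge0 (w.1*y.2 - w.2*y.1); rewrite expr2; nra.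
have h2 : (enorm2 w * enorm2 y) ^+ 2 = dot2 w w * dot2 y y.
  by rewrite exprMn !sq_enorm2.
have h3 := enorm2_ge0 w; have h4 := enorm2_ge0 y.
have h5 : 0 <= enorm2 w * enorm2 y by rewrite mulr_ge0.
rewrite -h2 in h1.
have [hp|hn] := lerP (dot2 w y) 0; first by apply: le_trans hp h5.
nra.
Qed.

Lemma cs1 (w y : R * R) : enorm2 y <= 1 -> dot2 w y <= enorm2 w.
Proof.
move=> hy; apply: le_trans (cauchy_schwarz w y) _.
have := enorm2_ge0 w; have := enorm2_ge0 y; nra.
Qed.

Lemma enorm2_scale (t : R) (y : R * R) : 0 <= t ->
  enorm2 (t * y.1, t * y.2) = t * enorm2 y.
Proof.
move=> ht; rewrite /enorm2 /dot2 /=.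
have -> : t * y.1 * (t * y.1) + t * y.2 * (t * y.2) = t ^+ 2 * (y.1 * y.1 + y.2 * y.2) by rewrite expr2; ring.
by rewrite sqrtrM ?sqrtr_sqr ?ger0_norm // sqr_ge0.
Qed.

Lemma dot2C (a b : R * R) : dot2 a b = dot2 b a.
Proof. rewrite /dot2; ring. Qed.

Lemma phi_ext_in (y : R * R) : unit_ball2 y -> phi_ext d v y = (pmax d v y)%:E.
Proof. by move=> hy; rewrite /phi_ext asboolT. Qed.

Lemma phis_ge (x y : R * R) : unit_ball2 y ->
  ((dot2 x y - pmax d v y)%:E <= phi_star d v x)%E.
Proof.
move=> hy; apply: ereal_sup_ubound; exists y => //.
by rewrite phi_ext_in // EFinB.
Qed.

Lemma phis_le_v k : (phi_star d v (d k) <= (v k)%:E)%E.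
Proof.
apply: ge_ereal_sup => _ [y yb <-].
rewrite phi_ext_in // -EFinB lee_fin.
have := pmax_ge y k; rewrite dot2C; lra.
Qed.

Lemma lim_arg (a b p : R) :
  (forall t, 0 <= t -> t < 1 -> t * a + (1 - t) * b <= p) -> a <= p.
Proof.
move=> H.
have hb : b <= p by have := H 0 (lexx _) ltr01; rewrite mul0r subr0 mul1r add0r.
rewrite leNgt; apply/negP => hap.
have hba : b < a by apply: le_lt_trans hb hap.
have hab0 : a - b != 0 by rewrite subr_eq0 gt_eqF.
pose u := (a - p) / (a - b).
have hu : u * (a - b) = a - p by rewrite /u divfK.
have u0 : 0 < u by rewrite /u divr_gt0 // subr_gt0.
have u1 : u <= 1 by rewrite /u ler_pdivrMr ?subr_gt0 // mul1r; lra.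
have := H (1 - u / 2) ltac:(lra) ltac:(lra).
nra.
Qed.

End Aux.


Theorem lemma2p7 (R : realType) (K : nat) (hK : (0 < K)%N)
  (d : 'I_K -> R * R) (alpha : 'I_K -> R)
  (halpha : forall k, 0 < alpha k)
  (hsum : \sum_(k < K) alpha k = pi)
  (v : 'I_K -> R)
  (hpog : pogorelov d alpha v) :
  phi_star d v = legendre (legendre (psi d v)).
Proof.
have k0 : 'I_K := Ordinal hK.
have y0b : unit_ball2 ((0:R), (0:R)).
  by rewrite /unit_ball2 /= /enorm2 /dot2 /= mulr0 addr0 sqrtr0 ltr01.
apply/funext => x; apply/eqP; rewrite eq_le; apply/andP; split.
- apply: ge_ereal_sup => _ [y yb <-].
  rewrite phi_ext_in //.
  have hy1 : enorm2 y <= 1 by apply: ltW.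
  have hL : (legendre (psi d v) y <= (pmax d v y)%:E)%E.
    apply: ge_ereal_sup => _ [z _ <-].
    have hz : ((dot2 z y - pmax d v y)%:E <= psi d v z)%E.
      apply: le_bigmin; first exact: leey.
      move=> k _.
      apply: le_trans _ (leeD (phis_ge d v (d k) yb) (lexx (enorm2 (z - d k))%:E)).
      rewrite -EFinD lee_fin.
      have := cs1 (z - d k) hy1; rewrite dot2_sub; lra.
    apply: le_trans (leeB (lexx _) hz) _.
    by rewrite -EFinB lee_fin; lra.
  apply: le_trans (leeB (lexx _) hL) _.
  rewrite (dot2C x y).
  by apply: ereal_sup_ubound; exists y.
- apply: ge_ereal_sup => _ [y _ <-].
  have hP0 := phis_ge d v x y0b.
  case eP: (phi_star d v x) hP0 => [p| |] hP0; last 2 first.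
  + exact: leey.
  + by move: hP0; rewrite leeNy_eq.
  rewrite lee_fin in hP0.
  have [hy1|hy1] := lerP (enorm2 y) 1.
  +
    have hLj : forall j, ((dot2 y (d j) - v j)%:E <= legendre (psi d v) y)%E.
      move=> j.
      have hpsi : (psi d v (d j) <= (v j)%:E)%E.
        apply: le_trans (bigmin_le _ j _) _.
        rewrite subrr.
        have -> : enorm2 (0 : R * R) = 0.
          by rewrite /enorm2 /dot2 /= mulr0 addr0 sqrtr0.
        by rewrite adde0 (phis_le_v hK).
      apply: le_trans _ (ereal_sup_ubound _).
        2: by exists (d j).
      by rewrite EFinB (dot2C y (d j)); apply: leeB.
    have [[i hi] _] := pmax_spec hK d v y.
    apply: le_trans (leeB (lexx _) (hLj i)) _.
    rewrite -EFinB lee_fin.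
    suff : dot2 x y - pmax d v y <= p by rewrite hi dot2C; lra.
    apply: (lim_arg (b := dot2 x (0, 0) - pmax d v (0, 0))) => t t0 t1.
    pose ty := (t * y.1, t * y.2).
    have tyb : unit_ball2 ty.
      rewrite /unit_ball2 /= /ty enorm2_scale //.
      have := enorm2_ge0 y; nra.
    have := phis_ge d v x tyb; rewrite eP lee_fin => hty.
    apply: le_trans hty.
    have [[l hl] _] := pmax_spec hK d v ty.
    have h1 := pmax_ge hK d v y l.
    have h2 := pmax_ge hK d v (0, 0) l.
    rewrite hl; move: h1 h2; rewrite /dot2 /ty /=.
    nra.
  +
    set s := enorm2 y.
    have hs2 : s ^+ 2 = dot2 y y by rewrite sq_enorm2.
    set A := dot2 y x - dot2 (d k0) y + v k0 - p.
    have hss : 0 < s ^+ 2 - s.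
      have hs1 : 1 < s := hy1. rewrite expr2; nra.
    pose t := `|A| / (s ^+ 2 - s).
    have t0 : 0 <= t by rewrite /t divr_ge0 // ltW.
    have ht : t * (s ^+ 2 - s) = `|A| by rewrite /t divfK // gt_eqF.
    pose z := ((d k0).1 + t * y.1, (d k0).2 + t * y.2).
    have hnz : enorm2 (z - d k0) = t * s.
      rewrite -enorm2_scale //; congr enorm2.
      rewrite [LHS]surjective_pairing; congr pair.
      - by change ((d k0).1 + t * y.1 - (d k0).1 = t * y.1); ring.
      - by change ((d k0).2 + t * y.2 - (d k0).2 = t * y.2); ring.
    have hpsi : (psi d v z <= (v k0 + t * s)%:E)%E.
      apply: le_trans (bigmin_le _ k0 _) _.
      by rewrite hnz EFinD; apply: leeD => //; apply: (phis_le_v hK).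
    have hL : ((dot2 z y - (v k0 + t * s))%:E <= legendre (psi d v) y)%E.
      apply: le_trans _ (ereal_sup_ubound _).
        2: by exists z.
      by rewrite EFinB; apply: leeB.
    apply: le_trans (leeB (lexx _) hL) _.
    rewrite -EFinB lee_fin.
    have hzy : dot2 z y = dot2 (d k0) y + t * s ^+ 2.
      by rewrite hs2 /z /dot2 /=; ring.
    rewrite hzy.
    have := ler_norm A.
    rewrite /A; nra.
Qed.
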